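(* Let $[G,f,\cdot]$ be an MC system on a finite graph $G$ with vertex set $\{1,\ldots,n\}$ and finite linearly ordered state set $P$, and let $x\in P^n$. Then for any two fair update schedules $W$ and $W'$, the state $x$ reaches a fixed point under $[G,f,W]$ and under $[G,f,W']$, and these two fixed points coincide; call it $z$. Moreover, every state $y\in P^n$ with $z\le y\le x$ reaches the fixed point $z$ (under any fair update schedule).
   Context: Let $G=(V,E)$ be a finite graph with $V=\{1,\ldots,n\}$, and let $P$ be a finite set with a linear order $\le$. Each vertex $i$ has a state $x_i\in P$ and a local function $f_i$ which takes as arguments the states of $i$ and of its neighbors $k_1,\ldots,k_{d_i}$ and returns a new state of $i$. An infinite sequence $W=W_1W_2\cdots$ of subsets $W_j\subseteq V$ is a fair update schedule if for every $k\ge1$ and every vertex $i$ there exists $l>k$ with $i\in W_l$. Given an initial state $x^{(0)}=x\in P^n$, the state $x^{(j)}$ at time $j>0$ is obtained from $x^{(j-1)}$ by letting every vertex $i\in W_j$ take the new state $f_i$ applied to the states (in $x^{(j-1)}$) of $i$ and its neighbors, while vertices not in $W_j$ keep their states; write $[G,f,W]^{(j)}(x)=x^{(j)}$. A state $x$ reaches a fixed point $z$ under $[G,f,W]$ if there is $k\ge0$ with $[G,f,W]^{(j)}(x)=[G,f,W]^{(k)}(x)=z$ for all $j>k$. $P^q$ carries the product partial order: $(x_1,\ldots,x_q)\le(y_1,\ldots,y_q)$ iff $x_j\le y_j$ for all $j$. A function $g\colon P^q\to P$ is monotone if $x\le y$ implies $g(x)\le g(y)$. A local function $f_i\colon(x_i,x_{k_1},\ldots,x_{k_{d_i}})\mapsto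 x_i'$ is contractive if $x_i'\le x_i$ for every argument. The system is an MC (monotone-contractive) system if every local function is monotone and contractive. *)

(* Defs.v *)
From HB Require Import structures.
From mathcomp Require Import all_boot all_order.
Set Implicit Arguments. Unset Strict Implicit. Unset Printing Implicit Defensive.
Import Order.TTheory.
Local Open Scope order_scope.

Section MC.
Variables (n : nat) (d : Order.disp_t) (P : finOrderType d).

Definition state := {ffun 'I_n -> P}.

Definition sle (x y : state) : Prop := forall j, x j <= y j.

Definition simple_graph (E : rel 'I_n) : Prop :=
  (forall i j, E i j = E j i) /\ (forall i, ~~ E i i).

Definition closed_nbr (E : rel 'I_n) (i j : 'I_n) : bool := (j == i) || E i j.

(* f i x is the local function of vertex i applied to the global state;
   monotonicity in the arguments (x_i, x_{k_1}, ..., x_{k_d}) only: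
   if x <= y on the closed neighbourhood of i then f i x <= f i y.
   (In particular f i depends only on the closed neighbourhood.) *)
Definition local_monotone (E : rel 'I_n) (f : 'I_n -> state -> P) : Prop :=
  forall i (x y : state),
    (forall j, closed_nbr E i j -> x j <= y j) -> f i x <= f i y.

Definition contractive (f : 'I_n -> state -> P) : Prop :=
  forall i (x : state), f i x <= x i.

Definition MC_system (E : rel 'I_n) (f : 'I_n -> state -> P) : Prop :=
  local_monotone E f /\ contractive f.

(* update schedule W_1 W_2 ... ; the value W 0 is irrelevant *)
Definition fair (W : nat -> {set 'I_n}) : Prop :=
  forall k, 1 <= k -> forall i, exists l, (k < l)%N /\ i \in W l.

Definition step (f : 'I_n -> state -> P) (S : {set 'I_n}) (x : state) : state :=
  [ffun i => if i \in S then f i x else x i].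

Fixpoint traj (f : 'I_n -> state -> P) (W : nat -> {set 'I_n}) (j : nat)
  (x : state) : state :=
  match j with
  | 0 => x
  | j'.+1 => step f (W j) (traj f W j' x)
  end.

Definition reaches (f : 'I_n -> state -> P) (W : nat -> {set 'I_n})
  (x z : state) : Prop :=
  exists k, traj f W k x = z /\ forall j, (k < j)%N -> traj f W j x = z.

End MC.

(* Main.v *)
Require Import Defs.
From mathcomp Require Import all_boot all_order.
From Stdlib Require Import Classical.
Set Implicit Arguments. Unset Strict Implicit. Unset Printing Implicit Defensive.
Import Order.TTheory.

Section Proofs.
Variables (n : nat) (d : Order.disp_t) (P : finOrderType d).
Variables (E : rel 'I_n) (f : 'I_n -> state n P -> P).
Hypothesis (hmono : local_monotone E f) (hcon : contractive f).

Definition below (x : state n P) : {set state n P} :=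
  [set y : state n P | [forall j : 'I_n, (y j <= x j)%O]].

Lemma meas_lt (x y : state n P) : sle y x -> y != x -> #|below y| < #|below x|.
Proof.
move=> Hyx Hne; apply: proper_card; apply/properP; split.
  apply/subsetP => u; rewrite !inE => /forallP H; apply/forallP => j.
  exact: le_trans (H j) (Hyx j).
exists x; first by rewrite inE; apply/forallP => j.
rewrite inE; apply/negP => /forallP H; move/eqP: Hne; apply.
by apply/ffunP => j; apply: le_anti; rewrite Hyx H.
Qed.

Lemma traj_dec W j y : sle (traj f W j.+1 y) (traj f W j y).
Proof. move=> i /=; rewrite ffunE; case: ifP => _ //; exact: hcon. Qed.

Lemma traj_mono W j m y : sle (traj f W (j + m) y) (traj f W j y).
Proof.
elim: m => [|m IH] i; first by rewrite addn0.
rewrite addnS; exact: le_trans (traj_dec _ _ _ i) (IH i).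
Qed.

Lemma traj_mono' W j k y : j <= k -> sle (traj f W k y) (traj f W j y).
Proof. by move=> hjk; rewrite -(subnKC hjk); apply: traj_mono. Qed.

Lemma below_fixed W (u y : state n P) :
  (forall i, f i u = u i) -> sle u y -> forall j, sle u (traj f W j y).
Proof.
move=> Hu Huy; elim => [|j IH] //= i; rewrite ffunE; case: ifP => _ //.
rewrite -Hu; apply: hmono => k _; exact: IH.
Qed.

Lemma stab_aux W y N : forall j0, #|below (traj f W j0 y)| <= N ->
  exists k, forall j, k <= j -> traj f W j y = traj f W k y.
Proof.
elim: N => [|N IH] j0 HN.
  have : traj f W j0 y \in below (traj f W j0 y) by rewrite inE; apply/forallP.
  move=> h; have : 0 < #|below (traj f W j0 y)| by apply/card_gt0P; exists (traj f W j0 y).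
  by rewrite leqn0 in HN; rewrite (eqP HN).
destruct (classic (forall j, j0 <= j -> traj f W j y = traj f W j0 y)) as [H|H].
  by exists j0.
have [j Hj] := not_all_ex_not _ _ H.
have hj : j0 <= j.
  case: (leqP j0 j) => // hj; exfalso; apply: Hj; move=> h.
  by rewrite ltnNge h in hj.
have hne : traj f W j y != traj f W j0 y by apply/eqP => e; apply: Hj; move=> _.
apply: (IH j); rewrite -ltnS; apply: leq_trans HN.
by apply: meas_lt => //; apply: traj_mono'.
Qed.

Lemma stab W y : exists k, forall j, k <= j -> traj f W j y = traj f W k y.
Proof. exact: (@stab_aux W y _ 0). Qed.

Lemma stab_fixed W y k : fair W -> (forall j, k <= j -> traj f W j y = traj f W k y) ->
  forall i, f i (traj f W k y) = traj f W k y i.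
Proof.
move=> HW Hk i; case: (HW k.+1 isT i) => l [hl hi].
case: l hl hi => [|l] // hl hi.
have e1 := Hk l.+1 (ltnW (ltnW hl)); have e2 := Hk l (ltnW (ltnSE hl)).
by rewrite -[in RHS]e1 /= ffunE hi e2.
Qed.

End Proofs.

Theorem theorem2 (n : nat) (d : Order.disp_t) (P : finOrderType d)
  (E : rel 'I_n) (f : 'I_n -> state n P -> P) :
  simple_graph E -> MC_system E f ->
  forall x : state n P,
  exists z : state n P,
    (forall W : nat -> {set 'I_n}, fair W -> reaches f W x z) /\
    (forall y : state n P, sle z y -> sle y x ->
       forall W : nat -> {set 'I_n}, fair W -> reaches f W y z).
Proof.
move=> _ [hmono hcon] x.
pose W0 := fun _ : nat => [set: 'I_n].
have fW0 : fair W0 by move=> k _ i; exists k.+1; rewrite ltnSn in_setT.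
have [k0 Hk0] := stab hcon W0 x.
set z := traj f W0 k0 x.
have zfix := stab_fixed fW0 Hk0.
have zx : sle z x by exact: (traj_mono' hcon W0 x (leq0n k0)).
suff main : forall y : state n P, sle z y -> sle y x ->
       forall W : nat -> {set 'I_n}, fair W -> reaches f W y z.
  by exists z; split => // W HW; apply: main => // i.
move=> y zy yx W HW.
have [k Hk] := stab hcon W y.
have z1fix := stab_fixed HW Hk.
have e : traj f W k y = z.
  apply/ffunP => i; apply: le_anti; apply/andP; split.
    apply: (below_fixed hmono W0 z1fix _ k0 i) => j.
    apply: le_trans (yx j).
    exact: (traj_mono' hcon W y (leq0n k) j).
  exact: (below_fixed hmono W zfix zy k i).
exists k; split => // j hj; rewrite -e; apply: Hk; exact: ltnW.
Qed.
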